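(* Let $\mathcal{G}$ be a hereditary graph class such that $\omega_{\mathcal{G}}:=\max_{H\in\mathcal{G}} mw(H)$ exists. Then for any graph $G$, $mw(G)\le\max(\mathcal{G}\text{-}mc(G),\ \omega_{\mathcal{G}})$.
   Context: A graph class is a set of graphs containing at least one non-empty graph; it is hereditary if it is closed under taking induced subgraphs. A module of $G$ is a vertex set $M$ such that every vertex outside $M$ is adjacent to all or none of $M$. A $\mathcal{G}$-modular partition of $G$ is a partition of $V(G)$ into modules $M$ with $G[M]\in\mathcal{G}$, and $\mathcal{G}\text{-}mc(G)$ is the minimum size of such a partition. The modular-width $mw(G)$ is the maximum number of children of a prime node in the modular decomposition tree of $G$ (the inclusion tree of strong modules, where a node for module $M$ is prime if both $G[M]$ and its complement are connected), and $0$ if there is no prime node. *)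

(* Defs.v *)
From mathcomp Require Import all_boot.
Set Implicit Arguments. Unset Strict Implicit. Unset Printing Implicit Defensive.

Record graph := Graph {
  vtx :> finType;
  adj : rel vtx;
  adj_sym : symmetric adj;
  adj_irr : irreflexive adj }.

Definition nonempty_graph (G : graph) : Prop := 0 < #|vtx G|.

Section Induced.
Variables (G : graph) (M : {set vtx G}).
Definition ind_vtx : finType := {x : vtx G | x \in M}.
Definition ind_adj : rel ind_vtx := fun x y => adj (val x) (val y).
Lemma ind_adj_sym : symmetric ind_adj.
Proof. by move=> x y; rewrite /ind_adj adj_sym. Qed.
Lemma ind_adj_irr : irreflexive ind_adj.
Proof. by move=> x; rewrite /ind_adj adj_irr. Qed.
Definition induced : graph := Graph ind_adj_sym ind_adj_irr.
End Induced.

Definition graph_class (C : graph -> Prop) : Prop :=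
  exists H, C H /\ nonempty_graph H.

Definition hereditary (C : graph -> Prop) : Prop :=
  forall G : graph, C G -> forall M : {set vtx G}, C (induced M).

Section Modules.
Variable G : graph.
Implicit Types M N : {set vtx G}.

Definition is_module M : bool :=
  [forall x, (x \notin M) ==>
     ([forall y in M, adj x y] || [forall y in M, ~~ adj x y])].

Definition overlap M N : bool :=
  [&& M :&: N != set0, ~~ (M \subset N) & ~~ (N \subset M)].

Definition strong M : bool :=
  [&& M != set0, is_module M & [forall N, is_module N ==> ~~ overlap M N]].

(* Children of a node M in the modular decomposition tree: the maximal
   strong modules properly contained in M. *)
Definition children M : {set {set vtx G}} :=
  [set N | [&& strong N, N \proper M &
     [forall N', (strong N' && (N' \proper M)) ==> ~~ (N \proper N')]]].

(* G[M] connected (M non-empty assumed via strong). *)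
Definition connected_in (e : rel (vtx G)) M : bool :=
  [forall x in M, forall y in M,
     connect [rel u v | [&& u \in M, v \in M & e u v]] x y].

Definition co_adj : rel (vtx G) := fun x y => (x != y) && ~~ adj x y.

Definition prime_node M : bool :=
  [&& strong M, connected_in (@adj G) M & connected_in co_adj M].

End Modules.

Definition mw (G : graph) : nat :=
  \max_(M : {set vtx G} | prime_node M) #|children M|.

Definition modular_partition (C : graph -> Prop) (G : graph)
    (P : {set {set vtx G}}) : Prop :=
  partition P [set: vtx G] /\
  forall M, M \in P -> is_module M /\ C (induced M).
Arguments modular_partition : clear implicits.

Definition is_mc (C : graph -> Prop) (G : graph) (k : nat) : Prop :=
  (exists P, modular_partition C G P /\ #|P| = k) /\
  (forall P, modular_partition C G P -> k <= #|P|).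

(* Main.v *)
Require Import Defs.
From mathcomp Require Import all_boot.
Set Implicit Arguments. Unset Strict Implicit. Unset Printing Implicit Defensive.

Section General.
Variable G : graph.
Implicit Types M N A B S : {set vtx G}.

Lemma moduleP M : reflect (forall x y z, x \notin M -> y \in M -> z \in M -> adj x y = adj x z)
  (is_module M).
Proof.
apply: (iffP forallP) => H.
- move=> x y z xM yM zM; have := H x; rewrite xM /= => /orP [/forallP A | /forallP A].
    by have := A y; have := A z; rewrite yM zM /= => -> ->.
  by have := A y; have := A z; rewrite yM zM /= => /negbTE -> /negbTE ->.
- move=> x; apply/implyP => xM.
  case: (boolP [forall y in M, adj x y]) => //= /forallPn [y].
  rewrite negb_imply => /andP[yM nxy]; apply/forallP => z; apply/implyP => zM.
  by rewrite -(H x y z xM yM zM).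
Qed.

Lemma modU A B : is_module A -> is_module B -> A :&: B != set0 -> is_module (A :|: B).
Proof.
move=> /moduleP mA /moduleP mB /set0Pn [c /setIP [cA cB]].
apply/moduleP => x y z; rewrite !inE negb_or => /andP [xA xB].
have K : forall u, (u \in A) || (u \in B) -> adj x u = adj x c.
  by move=> u /orP [uA|uB]; [apply: mA | apply: mB].
by move=> /K -> /K ->.
Qed.

Lemma sep (e : rel (vtx G)) M S x y : connected_in e M -> x \in S -> y \in M -> y \notin S ->
  S \subset M -> (forall u v, u \in S -> v \in M -> v \notin S -> ~~ e u v && ~~ e v u) -> False.
Proof.
move=> /forallP /(_ x) + xS yM yS sSM H.
rewrite (subsetP sSM _ xS) /= => /forallP /(_ y); rewrite yM /=.
move=> /connectP [p].
elim: p x xS => [|z p IH] x xS /=; first by move=> _ E; subst; rewrite xS in yS.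
move=> /andP [/and3P [xM zM exz] pp] E.
case: (boolP (z \in S)) => zS; first exact: (IH z zS pp E).
by have := H x z xS zM zS; rewrite exz.
Qed.

Lemma prime_no_cover M A B : prime_node M -> is_module A -> is_module B ->
  overlap A B -> A :|: B = M -> False.
Proof.
move=> /and3P [_ cM ccM] /moduleP mA /moduleP mB /and3P [/set0Pn [c /setIP [cA cB]] nAB nBA] U.
have [a aA aB] := subsetPn nAB.
have [b bB bA] := subsetPn nBA.
have Hs : forall u v, u \in A -> u \notin B -> v \in B -> adj u v = adj a b.
  move=> u v uA uB vB; rewrite (mB u v b uB vB bB) adj_sym (mA b u a bA uA aA) adj_sym //.
have sSM : A :\: B \subset M by rewrite -U; apply/subsetP => u; rewrite !inE => /andP [_ ->].
have aS : a \in A :\: B by rewrite inE aA aB.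
have bM : b \in M by rewrite -U inE bB orbT.
have bS : b \notin A :\: B by rewrite inE bB.
have vB : forall v, v \in M -> v \notin A :\: B -> v \in B.
  move=> v; rewrite -U !inE negb_and negbK => /orP [vA|->] //= /orP [//|vA'].
  by rewrite vA in vA'.
case s : (adj a b).
- apply: (sep ccM aS bM bS sSM) => u v; rewrite inE => /andP [uB uA] vM /(vB v vM) vB'.
  have h1 := Hs u v uA uB vB'; have h2 : adj v u = adj a b by rewrite adj_sym.
  by rewrite /co_adj h1 h2 s !andbF.
- apply: (sep cM aS bM bS sSM) => u v; rewrite inE => /andP [uB uA] vM /(vB v vM) vB'.
  have h1 := Hs u v uA uB vB'; have h2 : adj v u = adj a b by rewrite adj_sym.
  by rewrite h1 h2 s.
Qed.
End General.
Section General2.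
Variable G : graph.
Implicit Types M N X Y D : {set vtx G}.

Lemma strong_mod N : strong N -> is_module N.
Proof. by case/and3P. Qed.

Lemma child_above M X : prime_node M -> is_module X -> X != set0 -> X \proper M ->
  exists2 D, D \in children M & X \subset D.
Proof.
move=> pM mX X0 XM.
pose P := fun Y : {set vtx G} => [&& is_module Y, X \subset Y & Y \proper M].
have PX : P X by rewrite /P mX subxx XM.
have [D /and3P[mD XD DM] Dmax] := arg_maxnP (fun Y : {set vtx G} => #|Y|) PX.
have sM : strong M by case/and3P: pM.
have D0 : D != set0.
  by case/set0Pn: X0 => x xX; apply/set0Pn; exists x; apply: (subsetP XD).
have sD : strong D.
  rewrite /strong D0 mD /=; apply/forallP => Y; apply/implyP => mY; apply/negP => ov.
  have := ov; case/and3P => /set0Pn [z /setIP [zD zY]] nDY nYD.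
  move: sM => /and3P [_ _ /forallP /(_ Y)]; rewrite mY /= => nov.
  have zM : z \in M by apply: (subsetP (proper_sub DM)).
  case: (boolP (M \subset Y)) => MY.
    by rewrite (subset_trans (proper_sub DM) MY) in nDY.
  have YM : Y \subset M.
    move: nov; rewrite /overlap (negbTE MY).
    have -> : M :&: Y != set0 by apply/set0Pn; exists z; rewrite inE zM zY.
    by rewrite /= negbK.
  have UM : D :|: Y \subset M by rewrite subUset (proper_sub DM) YM.
  have UneM : D :|: Y != M by apply/eqP => E; exact: (prime_no_cover pM mD mY ov E).
  have PU : P (D :|: Y).
    rewrite /P modU //; last by apply/set0Pn; exists z; rewrite inE zD zY.
    by rewrite (subset_trans XD (subsetUl _ _)) properEneq UneM UM.
  have := Dmax _ PU.
  have : D \proper D :|: Y by rewrite setUC; apply: properUr.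
  move=> /proper_card lt; change (#|D :|: Y| <= #|D| -> False); by rewrite leqNgt lt.
exists D => //.
rewrite inE sD DM /=; apply/forallP => N'; apply/implyP => /andP [sN' N'M]; apply/negP => DN'.
have PN' : P N' by rewrite /P (strong_mod sN') (subset_trans XD (proper_sub DN')) N'M.
have := Dmax _ PN'; change (#|N'| <= #|D| -> False); by rewrite leqNgt (proper_card DN').
Qed.

Lemma children_eq M D1 D2 z : D1 \in children M -> D2 \in children M ->
  z \in D1 -> z \in D2 -> D1 = D2.
Proof.
rewrite !inE => /and3P [sD1 D1M /forallP max1] /and3P [sD2 D2M /forallP max2] z1 z2.
have ov : ~~ overlap D1 D2.
  by move: (sD1) => /and3P [_ _ /forallP /(_ D2)]; rewrite (strong_mod sD2).
have I0 : D1 :&: D2 != set0 by apply/set0Pn; exists z; rewrite inE z1 z2.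
move: ov; rewrite /overlap I0 /= negb_and !negbK => /orP [s12 | s21].
- apply/eqP; rewrite eqEproper s12 /=.
  by have := max1 D2; rewrite sD2 D2M.
- apply/esym/eqP; rewrite eqEproper s21 /=.
  by have := max2 D1; rewrite sD1 D1M.
Qed.
End General2.
Section Transfer.
Variables (G : graph) (X : {set vtx G}).
Hypothesis mX : is_module X.
Local Notation H := (induced X).
Local Notation v := (val : ind_vtx X -> vtx G).
Local Notation img S := (v @: S).
Definition rr (S : {set vtx G}) : {set vtx H} := [set y : vtx H | v y \in S].

Lemma v_inj : injective v. Proof. exact: val_inj. Qed.

Lemma imgK (S : {set vtx G}) : S \subset X -> img (rr S) = S.
Proof.
move=> sX; apply/setP => x; apply/imsetP/idP => [[y]|xS].
  by rewrite inE => yS ->.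
by exists (Sub x (subsetP sX x xS) : vtx H); rewrite ?inE SubK.
Qed.

Lemma rK (S' : {set vtx H}) : rr (img S') = S'.
Proof. by apply/setP => y; rewrite inE (mem_imset _ _ v_inj). Qed.

Lemma img_subE (A B : {set vtx H}) : (img A \subset img B) = (A \subset B).
Proof.
apply/idP/idP => [s|]; last exact: imsetS.
apply/subsetP => x xA; have := subsetP s (v x); rewrite !(mem_imset _ _ v_inj); exact.
Qed.

Lemma img_properE (A B : {set vtx H}) : (img A \proper img B) = (A \proper B).
Proof. by rewrite !properE !img_subE. Qed.

Lemma mod_img (S' : {set vtx H}) : is_module S' = is_module (img S').
Proof.
apply/(moduleP (G:=H) S')/moduleP => Hm.
- move=> x y z xn /imsetP[y' y'S ->] /imsetP[z' z'S ->].
  case: (boolP (x \in X)) => xX.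
    pose x' := (Sub x xX : vtx H).
    have x'n : x' \notin S'.
      by apply: contra xn => x'S; apply/imsetP; exists x'; rewrite ?SubK.
    exact: (Hm x' y' z' x'n y'S z'S).
  exact: (moduleP _ mX x (v y') (v z') xX (valP y') (valP z')).
- move=> x' y' z' x'n y'S z'S.
  apply: (Hm (v x') (v y') (v z')); rewrite ?(mem_imset _ _ v_inj) //.
Qed.

Lemma ov_img (A B : {set vtx H}) : overlap (img A) (img B) = overlap A B.
Proof.
rewrite /overlap -imsetI; last by move=> a b _ _; apply: v_inj.
by rewrite imset_eq0 !img_subE.
Qed.

Lemma strong_img (S' : {set vtx H}) : strong (img S') -> strong S'.
Proof.
case/and3P => ne m /forallP no.
rewrite /strong -(imset_eq0 v) ne mod_img m /=.
apply/forallP => N'; apply/implyP => mN'.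
by have := no (img N'); rewrite -mod_img mN' ov_img.
Qed.

Lemma strong_img_in (M : {set vtx G}) (S' : {set vtx H}) : strong M -> M \subset X -> img S' \subset M ->
  strong S' -> strong (img S').
Proof.
move=> sM MX SM /and3P [ne m /forallP no].
rewrite /strong imset_eq0 ne -mod_img m /=.
apply/forallP => Y; apply/implyP => mY; apply/negP => ov.
have := ov; case/and3P => /set0Pn [z /setIP [zS zY]] nSY nYS.
move: sM => /and3P [_ _ /forallP /(_ Y)]; rewrite mY /= => nov.
have zM : z \in M by apply: (subsetP SM).
case: (boolP (M \subset Y)) => MY.
  by rewrite (subset_trans SM MY) in nSY.
have YM : Y \subset M.
  move: nov; rewrite /overlap (negbTE MY).
  have -> : M :&: Y != set0 by apply/set0Pn; exists z; rewrite inE zM zY.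
  by rewrite /= negbK.
have YX := subset_trans YM MX.
move: mY ov; rewrite -(imgK YX) -mod_img ov_img => mY ov.
by have := no (rr Y); rewrite mY ov.
Qed.

Lemma conn_r (e : rel (vtx G)) (e' : rel (vtx H)) (M : {set vtx G}) :
  (forall u w, e' u w = e (v u) (v w)) -> M \subset X ->
  connected_in e M -> connected_in e' (rr M).
Proof.
move=> He MX /forallP cM; apply/forallP => x'; apply/implyP => x'M.
apply/forallP => y'; apply/implyP => y'M.
rewrite inE in x'M; rewrite inE in y'M.
have := cM (v x'); rewrite x'M => /forallP /(_ (v y')); rewrite y'M /=.
move=> /connectP [p pp E].
have key : forall p u, u \in M ->
    path [rel a b | [&& a \in M, b \in M & e a b]] u p ->
    connect [rel a b | [&& a \in rr M, b \in rr M & e' a b]]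
      (insubd x' u) (insubd x' (last u p)).
  elim => [|w q IH] u uM /=; first by move=> _; exact: connect0.
  move=> /andP [/and3P [_ wM euw] pp']; apply: connect_trans (IH w wM pp').
  apply: connect1; rewrite /= !inE He !val_insubd (subsetP MX u uM) (subsetP MX w wM).
  by rewrite uM wM euw.
by have := key p (v x') x'M pp; rewrite -E !valKd.
Qed.

Lemma children_r (M : {set vtx G}) : prime_node M -> M \subset X ->
  prime_node (rr M) /\ #|children M| <= #|children (rr M)|.
Proof.
move=> pM MX; have := pM; case/and3P => sM cM ccM.
have imM := imgK MX.
have sRM : strong (rr M) by apply: strong_img; rewrite imM.
split.
  rewrite /prime_node sRM (conn_r _ MX cM) //.
  apply: (conn_r _ MX ccM) => u w; rewrite /co_adj /=.
  by rewrite -(val_eqE u w).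
have inj : {in children M &, injective rr}.
  move=> N1 N2; rewrite !inE => /and3P [_ /proper_sub N1M _] /and3P [_ /proper_sub N2M _] E.
  by rewrite -(imgK (subset_trans N1M MX)) -(imgK (subset_trans N2M MX)) E.
rewrite -(card_in_imset inj); apply: subset_leq_card; apply/subsetP => _ /imsetP [N NC ->].
move: NC; rewrite !inE => /and3P [sN NM /forallP mx].
have NX := subset_trans (proper_sub NM) MX.
have imN := imgK NX.
have sRN : strong (rr N) by apply: strong_img; rewrite imN.
rewrite sRN /= -img_properE imN imM NM /=.
apply/forallP => N''; apply/implyP => /andP [sN'' N''M]; apply/negP => NN''.
rewrite -img_properE imM in N''M.
rewrite -img_properE imN in NN''.
have sI := strong_img_in sM MX (proper_sub N''M) sN''.
by have := mx (img N''); rewrite sI N''M NN''.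
Qed.
End Transfer.
Theorem theorem5 (C : graph -> Prop) (w : nat) :
  graph_class C -> hereditary C ->
  (exists H, C H /\ mw H = w) -> (forall H, C H -> mw H <= w) ->
  forall (G : graph) (k : nat), is_mc C G k -> mw G <= maxn k w.
Proof.
move=> _ _ _ Hw G k [[P [[Ppart Pm] Pk]] _].
rewrite /mw; apply/bigmax_leqP => M pM.
have sM : strong M by case/and3P: pM.
have [x xM] : exists x, x \in M by case/and3P: sM => /set0Pn.
case: (boolP [exists X in P, M \subset X]) => [/existsP [X /andP [XP MX]] | nE].
  have [mX CX] := Pm X XP.
  have [pr le] := children_r mX pM MX.
  apply: leq_trans le _; apply: leq_trans (leq_maxr k w); apply: leq_trans (Hw _ CX).
  rewrite /mw; exact: (@leq_bigmax_cond _ (fun S => prime_node S) (fun S => #|children S|) _ pr).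
have cov : cover P = setT by case/and3P: Ppart => /eqP.
have inP : forall y, pblock P y \in P by move=> y; apply: pblock_mem; rewrite cov inE.
have inB : forall y, y \in pblock P y by move=> y; rewrite mem_pblock cov inE.
have key : forall D y, D \in children M -> y \in D -> pblock P y \subset D.
  move=> D y DC yD.
  have := DC; rewrite inE => /and3P [_ DM _].
  have yM : y \in M by apply: (subsetP (proper_sub DM)).
  have [mB _] := Pm _ (inP y).
  have MB : ~~ (M \subset pblock P y).
    by apply: contra nE => MB; apply/existsP; exists (pblock P y); rewrite inP MB.
  have BM : pblock P y \subset M.
    move: sM => /and3P [_ _ /forallP /(_ (pblock P y))]; rewrite mB /= /overlap (negbTE MB).
    have -> : M :&: pblock P y != set0 by apply/set0Pn; exists y; rewrite inE yM inB.
    by rewrite /= negbK.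
  have BpM : pblock P y \proper M by rewrite properE BM.
  have B0 : pblock P y != set0 by apply/set0Pn; exists y.
  have [D' D'C BD'] := child_above pM mB B0 BpM.
  by rewrite (children_eq DC D'C yD (subsetP BD' _ (inB y))).
pose f := fun D : {set vtx G} => pblock P (odflt x [pick y in D]).
have fD : forall D, D \in children M -> exists2 y, y \in D & f D = pblock P y.
  move=> D DC; have := DC; rewrite inE => /and3P [/and3P [/set0Pn [z zD] _ _] _ _].
  rewrite /f; case: pickP => [y yD|/(_ z)]; last by rewrite zD.
  by exists y.
have inj : {in children M &, injective f}.
  move=> D1 D2 D1C D2C E.
  have [y1 y1D1 f1] := fD _ D1C.
  have s2 := key _ _ D2C.
  have [y2 y2D2 f2] := fD _ D2C.
  have : y1 \in D2 by apply: (subsetP (key _ _ D2C y2D2)); rewrite -f2 -E f1 inB.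
  exact: children_eq D1C D2C y1D1.
rewrite -(card_in_imset inj); apply: leq_trans (leq_maxl k w); rewrite -Pk.
apply: subset_leq_card; apply/subsetP => _ /imsetP [D _ ->]; exact: inP.
Qed.
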